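(* Let $q$ be a prime power, let $F_1\subsetneq F_0\subseteq\mathbb{F}_q^n$ be linear codes of dimensions $f_1<f_0$, and let $G_E\in\mathbb{F}_q^{e\times n}$ be a matrix (not necessarily of full rank) with row space $E$ such that $F_0\cap E=\{\underline{0}\}$. Let $0\le u\le e$, $v=e-u$, and write $G_E=\begin{bmatrix}G_U\\ G_V\end{bmatrix}$ with $G_U$ the first $u$ rows and $G_V$ the last $v$ rows; let $U$ and $V$ be the row spaces of $G_U$ and $G_V$. Consider the QSS scheme on $n+e$ parties given by the extended CSS code $\mathrm{ECSS}(F_0,F_1,G_E)$ (party $j$ holding the $j$-th encoded qudit). Define $$\tau_u=n-\min\{\mathrm{wt}((F_0+V)\setminus(F_1+V)),\ \mathrm{wt}((F_1+U)^\perp\setminus(F_0+U)^\perp)\}+1.$$ Then for an integer $0\le\tau\le n$, the set $J\cup\{n+1,n+2,\dots,n+u\}$ is authorized for every $J\subseteq[n]$ with $|J|=\tau$ if and only if $\tau\geq\tau_u$.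
   Context: For linear codes $L_1\subsetneq L_0\subseteq\mathbb{F}_q^n$, $\mathrm{wt}(L_0\setminus L_1)=\min\{\mathrm{wt}(\underline{c}):\underline{c}\in L_0,\ \underline{c}\notin L_1\}$ (Hamming weight); $L^\perp$ is the dual code. For a generator matrix $G_{F_0}=\begin{bmatrix}G_{F_0/F_1}\\ G_{F_1}\end{bmatrix}$ of $F_0$ with $G_{F_1}$ a generator matrix of $F_1$ and $G_{F_0/F_1}$ generating a complement of $F_1$ in $F_0$, the extended CSS code $\mathrm{ECSS}(F_0,F_1,G_E)$ is the CSS code of $C_0$ over $C_1$, where $C_0,C_1\subseteq\mathbb{F}_q^{n+e}$ are generated by $\begin{bmatrix}G_{F_0}&0\\ G_E&I_e\end{bmatrix}$ and $\begin{bmatrix}G_{F_1}&0\\ G_E&I_e\end{bmatrix}$ respectively. Its encoding maps, up to normalization and extended linearly, a basis state $|\underline{s}\rangle$, $\underline{s}\in\mathbb{F}_q^{f_0-f_1}$, to $$\sum_{\underline{r}_1\in\mathbb{F}_q^{f_1},\,\underline{r}_2\in\mathbb{F}_q^{e}}\Big|[\,G_{F_0/F_1}^T\ G_{F_1}^T\ G_E^T\,]\begin{bmatrix}\underline{s}\\ \underline{r}_1\\ \underline{r}_2\end{bmatrix}\Big\rangle|\underline{r}_2\rangle,$$ a state of $n+e$ qudits of dimension $q$; qudit $j$ is given to party $j\in[n+e]$. In a QSS scheme, a set of parties is authorized if the secret can be recovered from their shares (and unauthorized if their shares contain no information about the secret). *)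

(* Defs.v *)
From HB Require Import structures.
From mathcomp Require Import all_boot all_order all_algebra.
Set Implicit Arguments. Unset Strict Implicit. Unset Printing Implicit Defensive.
Import Order.TTheory GRing.Theory Num.Theory.
Local Open Scope ring_scope.

Definition wt (F : finFieldType) (n : nat) (x : 'rV[F]_n) : nat :=
  #|[set j : 'I_n | x 0 j != 0]|.

(* wt(L0 \ L1) = min{ wt c : c in L0, c notin L1 } where L0, L1 are the row
   spaces of the matrices L0, L1 (default n.+1 if the set is empty, which never
   happens under the hypotheses of the theorem). *)
Definition wt_diff (F : finFieldType) (n m0 m1 : nat)
    (L0 : 'M[F]_(m0, n)) (L1 : 'M[F]_(m1, n)) : nat :=
  \big[minn/n.+1]_(c : 'rV[F]_n | (c <= L0)%MS && ~~ (c <= L1)%MS) wt c.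

Definition dual (F : finFieldType) (n m : nat) (L : 'M[F]_(m, n)) : 'M[F]_n :=
  kermx L^T.

(* tau_u, where F0 = rowspace [GS; G1], F1 = rowspace G1, U = rowspace GU,
   V = rowspace GV. *)
Definition tau_u (F : finFieldType) (n k f1 u v : nat)
    (GS : 'M[F]_(k, n)) (G1 : 'M[F]_(f1, n))
    (GU : 'M[F]_(u, n)) (GV : 'M[F]_(v, n)) : nat :=
  (n - minn (wt_diff (col_mx GS G1 + GV)%MS (G1 + GV)%MS)
            (wt_diff (dual (G1 + GU)%MS) (dual (col_mx GS G1 + GU)%MS)) + 1)%N.

(* Operators on the space with orthonormal basis indexed by a finType S are
   represented by their matrix entries  rho s t = <s| rho |t>. *)

(* Amplitude <x| Enc |s> of the (unnormalized) ECSS encoding of basis state |s>: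
   sum_{r1, r2} | s GS + r1 G1 + r2 GE >|r2>. *)
Definition ecss_amp (C : numClosedFieldType) (F : finFieldType) (n k f1 e : nat)
    (GS : 'M[F]_(k, n)) (G1 : 'M[F]_(f1, n)) (GE : 'M[F]_(e, n))
    (s : 'rV[F]_k) (x : 'rV[F]_(n + e)) : C :=
  \sum_(r1 : 'rV[F]_f1) \sum_(r2 : 'rV[F]_e)
     (nat_of_bool (x == row_mx (s *m GS + r1 *m G1 + r2 *m GE) r2))%:R.

Definition ecss_enc (C : numClosedFieldType) (F : finFieldType) (n k f1 e : nat)
    (GS : 'M[F]_(k, n)) (G1 : 'M[F]_(f1, n)) (GE : 'M[F]_(e, n))
    (rho : 'rV[F]_k -> 'rV[F]_k -> C) (x y : 'rV[F]_(n + e)) : C :=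
  ((#|F|%:R : C) ^+ (f1 + e))^-1 *
  \sum_(s : 'rV[F]_k) \sum_(t : 'rV[F]_k)
     ecss_amp C GS G1 GE s x * rho s t * (ecss_amp C GS G1 GE t y)^*.

Definition labels (F : finFieldType) (N : nat) (A : {set 'I_N}) : finType :=
  {ffun {i : 'I_N | i \in A} -> F}.

Definition restr (F : finFieldType) (N : nat) (A : {set 'I_N}) (x : 'rV[F]_N) :
    labels F A := [ffun i => x 0 (val i)].

Definition ptrace (C : numClosedFieldType) (F : finFieldType) (N : nat)
    (A : {set 'I_N}) (sigma : 'rV[F]_N -> 'rV[F]_N -> C) (a b : labels F A) : C :=
  \sum_(x : 'rV[F]_N | restr A x == a)
    \sum_(y : 'rV[F]_N | (restr A y == b) &&
                         [forall j : 'I_N, (j \notin A) ==> (x 0 j == y 0 j)])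
      sigma x y.

Definition is_density (C : numClosedFieldType) (S : finType) (rho : S -> S -> C) : Prop :=
  (forall w : S -> C, 0 <= \sum_(s : S) \sum_(t : S) (w s)^* * rho s t * w t) /\
  \sum_(s : S) rho s s = 1.

(* A quantum channel (CPTP map) from operators on L to operators on S, given by
   Kraus operators K k : L -> S with entries K k s l = <s| K_k |l>. *)
Definition kraus_tp (C : numClosedFieldType) (L S : finType) (m : nat)
    (K : 'I_m -> S -> L -> C) : Prop :=
  forall l l' : L, \sum_(k < m) \sum_(s : S) (K k s l)^* * K k s l' = (nat_of_bool (l == l'))%:R.

Definition kraus_apply (C : numClosedFieldType) (L S : finType) (m : nat)
    (K : 'I_m -> S -> L -> C) (sigma : L -> L -> C) (s t : S) : C :=
  \sum_(k < m) \sum_(l : L) \sum_(l' : L) K k s l * sigma l l' * (K k t l')^*.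

Definition authorized (C : numClosedFieldType) (F : finFieldType) (n k f1 e : nat)
    (GS : 'M[F]_(k, n)) (G1 : 'M[F]_(f1, n)) (GE : 'M[F]_(e, n))
    (A : {set 'I_(n + e)}) : Prop :=
  exists (m : nat) (K : 'I_m -> 'rV[F]_k -> labels F A -> C),
    kraus_tp K /\
    forall rho : 'rV[F]_k -> 'rV[F]_k -> C, is_density rho ->
      forall s t, kraus_apply K (@ptrace C F _ A (ecss_enc GS G1 GE rho)) s t = rho s t.

(* The party set J \cup {n+1, ..., n+u} (0-indexed: J and n, ..., n+u-1). *)
Definition parties_Ju (n u v : nat) (J : {set 'I_n}) : {set 'I_(n + (u + v))} :=
  [set lshift (u + v) j | j in J] :|: [set rshift n (lshift v i) | i : 'I_u].

(* Main.v *)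
Require Import Defs.
From HB Require Import structures.
From mathcomp Require Import all_boot all_order all_algebra.
From mathcomp Require Import zify ring.
Set Implicit Arguments. Unset Strict Implicit. Unset Printing Implicit Defensive.
Import Order.TTheory GRing.Theory Num.Theory.
Local Open Scope ring_scope.

Section LinAlg.
Variable F : fieldType.

Lemma orthS m a b (A : 'M[F]_(a, m)) (B : 'M[F]_(b, m)) (y : 'rV[F]_m) :
  (B <= A)%MS -> y *m A^T = 0 -> y *m B^T = 0.
Proof. by case/submxP=> D ->; rewrite trmx_mul mulmxA => ->; rewrite mul0mx. Qed.

Lemma orth_sub m a b (A : 'M[F]_(a, m)) (B : 'M[F]_(b, m)) :
  (forall w : 'rV[F]_m, w *m A^T = 0 -> w *m B^T = 0) -> (B <= A)%MS.
Proof.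
move=> H.
set L := kermx A^T.
have HL : L *m A^T = 0 by apply/sub_kermxP.
have HLB : L *m B^T = 0.
  apply/row_matrixP=> i; rewrite row_mul row0; apply: H.
  by rewrite -row_mul HL row0.
have sK : forall c (X : 'M[F]_(c, m)), X *m L^T = 0 -> (X <= kermx L^T)%MS.
  by move=> c X HX; apply/sub_kermxP.
have sA : (A <= kermx L^T)%MS by apply: sK; rewrite -[A]trmxK -trmx_mul HL trmx0.
have sB : (B <= kermx L^T)%MS by apply: sK; rewrite -[B]trmxK -trmx_mul HLB trmx0.
have rk : (\rank (kermx L^T) <= \rank A)%N.
  rewrite mxrank_ker mxrank_tr /L mxrank_ker mxrank_tr.
  have := rank_leq_col A; lia.
have /eqmxP eqA : (A == kermx L^T)%MS.
  by rewrite -(mxrank_leqif_eq sA); apply/eqP/anti_leq; rewrite rk mxrankS.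
by rewrite eqA.
Qed.

Lemma solve_mx M p k (X : 'M[F]_(M, p)) (T : 'M[F]_(M, k)) :
  (forall w : 'rV[F]_M, w *m X = 0 -> w *m T = 0) -> exists Q, X *m Q = T.
Proof.
move=> H.
have : (T^T <= X^T)%MS by apply: orth_sub => w; rewrite !trmxK; apply: H.
case/submxP=> D HD; exists D^T.
by rewrite -[T]trmxK HD trmx_mul trmxK.
Qed.
End LinAlg.

Section Q.
Variables (C : numClosedFieldType) (F : finFieldType) (n k f1 e : nat).
Variables (GS : 'M[F]_(k, n)) (G1 : 'M[F]_(f1, n)) (GE : 'M[F]_(e, n)).

Definition cw (s : 'rV[F]_k) (r1 : 'rV[F]_f1) (r2 : 'rV[F]_e) : 'rV[F]_(n + e) :=
  row_mx (s *m GS + r1 *m G1 + r2 *m GE) r2.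

Lemma sum_pick (T : finType) (c : T) (H : T -> C) :
  \sum_(x : T) (x == c)%:R * H x = H c.
Proof.
rewrite (bigD1 c) //= eqxx mul1r big1 ?addr0 // => x /negbTE ->; by rewrite mul0r.
Qed.

Lemma amp_sum s (H : 'rV[F]_(n + e) -> C) :
  \sum_x ecss_amp C GS G1 GE s x * H x = \sum_r1 \sum_r2 H (cw s r1 r2).
Proof.
rewrite /ecss_amp.
under eq_bigr do rewrite mulr_suml; rewrite exchange_big; apply: eq_bigr => r1 _.
under eq_bigr do rewrite mulr_suml; rewrite exchange_big; apply: eq_bigr => r2 _.
exact: sum_pick.
Qed.

Lemma amp_conj s x : (ecss_amp C GS G1 GE s x)^* = ecss_amp C GS G1 GE s x.
Proof.
rewrite /ecss_amp rmorph_sum; apply: eq_bigr => r1 _.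
rewrite rmorph_sum; apply: eq_bigr => r2 _; exact: conjC_nat.
Qed.

Lemma sum_swap (I J : finType) (f : I -> J -> C) :
  \sum_(i : I) \sum_(j : J) f i j = \sum_(j : J) \sum_(i : I) f i j.
Proof. exact: exchange_big. Qed.

Lemma sum_swap4 (I J K L : finType) (f : I -> J -> K -> L -> C) :
  \sum_a \sum_b \sum_c \sum_d f a b c d = \sum_c \sum_d \sum_a \sum_b f a b c d.
Proof.
under eq_bigr do rewrite sum_swap.
rewrite sum_swap; apply: eq_bigr => c _.
under eq_bigr do rewrite sum_swap.
by rewrite sum_swap.
Qed.

Lemma sum_enum (T : finType) (f : T -> C) :
  \sum_(i < #|{: T}|) f (enum_val i) = \sum_x f x.
Proof. by rewrite -(big_enum_val f) ; apply: eq_bigl => x; rewrite inE. Qed.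

Lemma sum_pick2 (T : finType) (c : T) (g : T -> C) :
  \sum_(x : T) (x == c)%:R * g x = g c.
Proof. exact: sum_pick. Qed.

Definition Nq : C := ((#|F|%:R : C) ^+ (f1 + e))^-1.

Lemma enc_expand rho (G : 'rV[F]_(n + e) -> 'rV[F]_(n + e) -> C) :
  \sum_x \sum_y ecss_enc GS G1 GE rho x y * G x y =
  Nq * \sum_s \sum_t rho s t *
     \sum_r1 \sum_r2 \sum_r1' \sum_r2' G (cw s r1 r2) (cw t r1' r2').
Proof.
rewrite /ecss_enc -/Nq.
transitivity (Nq * \sum_x \sum_y \sum_s \sum_t rho s t *
   (ecss_amp C GS G1 GE s x * (ecss_amp C GS G1 GE t y * G x y))).
  rewrite mulr_sumr; apply: eq_bigr => x _; rewrite mulr_sumr; apply: eq_bigr => y _.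
  rewrite -mulrA; congr (_ * _); rewrite mulr_suml; apply: eq_bigr => s _.
  rewrite mulr_suml; apply: eq_bigr => t _; rewrite amp_conj; ring.
congr (_ * _).
rewrite sum_swap; under eq_bigr do rewrite sum_swap.
rewrite sum_swap; apply: eq_bigr => s _.
under eq_bigr do rewrite sum_swap.
rewrite sum_swap; apply: eq_bigr => t _.
rewrite sum_swap; under eq_bigr do rewrite -mulr_sumr.
rewrite -mulr_sumr; congr (_ * _).
under eq_bigr do rewrite -mulr_sumr.
rewrite amp_sum; apply: eq_bigr => r1 _; apply: eq_bigr => r2 _.
by rewrite amp_sum.
Qed.


Variable A : {set 'I_(n + e)}.

Definition ag (x y : 'rV[F]_(n + e)) : bool :=
  [forall j : 'I_(n + e), (j \notin A) ==> (x 0 j == y 0 j)].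

Lemma ptrace_sum (sigma : 'rV[F]_(n + e) -> 'rV[F]_(n + e) -> C) a b :
  @ptrace C F _ A sigma a b = \sum_x \sum_y sigma x y *
     ((restr A x == a)%:R * ((restr A y == b)%:R * (ag x y)%:R)).
Proof.
rewrite /ptrace big_mkcond; apply: eq_bigr => x _.
case: eqP => _; last by rewrite big1 // => y _; rewrite mul0r mulr0.
rewrite big_mkcond; apply: eq_bigr => y _; rewrite /ag.
by case: eqP => _; case: forallP => _ /=; rewrite ?mulr1 ?mulr0 ?mul0r.
Qed.

Definition ext (l : labels F A) : 'rV[F]_(n + e) :=
  \row_j (if @insub _ (fun j => j \in A) _ j is Some i then l i else 0).

Lemma ext_restr x j : ext (restr A x) 0 j = if j \in A then x 0 j else 0.
Proof.
rewrite /ext mxE; case: insubP => [i Hi <-|/negbTE -> //].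
by rewrite (valP i) /restr ffunE.
Qed.

Lemma restr_ext l : restr A (ext l) = l.
Proof.
apply/ffunP => i; rewrite /restr ffunE /ext mxE.
case: insubP => [i' _ Hv|]; last by rewrite (valP i).
by congr (l _); apply: val_inj.
Qed.

Lemma restr_ag x y : (restr A x == restr A y) && ag x y = (x == y).
Proof.
apply/idP/eqP => [/andP[/eqP Hr /forallP Ha]|->]; last first.
  by rewrite eqxx /=; apply/forallP => j; rewrite eqxx implybT.
apply/rowP => j; case Hj : (j \in A).
  by have := congr1 (fun f : labels F A => f (exist _ j Hj)) Hr; rewrite /restr !ffunE.
by have := Ha j; rewrite Hj /= => /eqP.
Qed.


Lemma cwB s r1 r2 s' r1' r2' :
  cw (s - s') (r1 - r1') (r2 - r2') = cw s r1 r2 - cw s' r1' r2'.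
Proof.
rewrite /cw !mulmxBl opp_row_mx add_row_mx; congr row_mx.
by apply/rowP => j; rewrite !mxE; ring.
Qed.

Lemma cwD s r1 r2 s' r1' r2' :
  cw (s + s') (r1 + r1') (r2 + r2') = cw s r1 r2 + cw s' r1' r2'.
Proof.
rewrite /cw !mulmxDl add_row_mx; congr row_mx.
by apply/rowP => j; rewrite !mxE; ring.
Qed.

Definition diagA : 'M[F]_(n + e) := diag_mx (\row_j ((j \in A)%:R : F)).

Lemma ext_restr_mx x : ext (restr A x) = x *m diagA.
Proof.
apply/rowP => j; rewrite ext_restr mul_mx_diag !mxE.
by case: (j \in A); rewrite ?mulr1 ?mulr0.
Qed.

Lemma count_r (a : 'rV[F]_f1) (b : 'rV[F]_f1) (c : 'rV[F]_e) (d : 'rV[F]_e) :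
  \sum_(r1 : 'rV[F]_f1) \sum_(r2 : 'rV[F]_e) \sum_(r1' : 'rV[F]_f1) \sum_(r2' : 'rV[F]_e)
    ((r1 - a == r1' - b) && (r2 - c == r2' - d))%:R = (#|F| ^ (f1 + e))%:R :> C.
Proof.
transitivity (\sum_(r1 : 'rV[F]_f1) \sum_(r2 : 'rV[F]_e) (1 : C)).
  apply: eq_bigr => r1 _; apply: eq_bigr => r2 _.
  transitivity (\sum_(r1' : 'rV[F]_f1) (r1' == r1 - a + b)%:R *
     \sum_(r2' : 'rV[F]_e) (r2' == r2 - c + d)%:R * (1 : C)).
    apply: eq_bigr => r1' _; rewrite mulr_sumr; apply: eq_bigr => r2' _.
    by rewrite mulr1 -natrM mulnb [r1 - a == _]eq_sym [r2 - c == _]eq_sym !subr_eq.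
  rewrite (sum_pick (r1 - a + b) (fun r1' => \sum_(r2' : 'rV[F]_e) (r2' == r2 - c + d)%:R * (1 : C))).
  by rewrite (sum_pick (r2 - c + d) (fun _ => (1 : C))).
under eq_bigr do rewrite sumr_const.
rewrite sumr_const -mulrnA.
have E1 : #|(xpredT : pred 'rV[F]_f1)| = #|{: 'rV[F]_f1}| by [].
have E2 : #|(xpredT : pred 'rV[F]_e)| = #|{: 'rV[F]_e}| by [].
by rewrite E1 E2 !card_mx !mul1n expnD mulnC.
Qed.

Section Recover.
Variables (Q : 'M[F]_(n + e, k)) (L1 : 'M[F]_(k, f1)) (L2 : 'M[F]_(k, e)).
Hypothesis HQ : forall s r1 r2, cw s r1 r2 *m diagA *m Q = s.
Hypothesis Hk : forall s j, j \notin A -> cw s (s *m L1) (s *m L2) 0 j = 0.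
Hypothesis Hinj : forall a b a' b', cw 0 a b = cw 0 a' b' -> a = a' /\ b = b'.

Definition kap s := cw s (s *m L1) (s *m L2).
Definition Pl (l : labels F A) := ext l *m Q.
Definition Kh (h : labels F A) (s : 'rV[F]_k) (l : labels F A) : C :=
  (h == restr A (ext l - kap s))%:R * (Pl l == s)%:R.

Lemma ext_val l (i : {j | j \in A}) : ext l 0 (val i) = l i.
Proof. by have := congr1 (fun f : labels F A => f i) (restr_ext l); rewrite /restr ffunE. Qed.

Lemma subE (x y : 'rV[F]_(n + e)) j : (x - y) 0 j = x 0 j - y 0 j.
Proof. by rewrite !mxE. Qed.

Lemma restr_sub_inj l l' c :
  (restr A (ext l - c) == restr A (ext l' - c)) = (l == l').
Proof.
apply/eqP/eqP => [H|->//]; apply/ffunP => i.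
have := congr1 (fun f : labels F A => f i) H; rewrite /restr !ffunE !subE.
by move/addIr; rewrite !ext_val.
Qed.

Lemma Kh_tp l l' :
  \sum_h \sum_s (Kh h s l)^* * Kh h s l' = (l == l')%:R :> C.
Proof.
rewrite sum_swap.
transitivity (\sum_s ((s == Pl l)%:R : C) * ((restr A (ext l - kap s) == restr A (ext l' - kap s))%:R
   * (Pl l' == s)%:R)).
  apply: eq_bigr => s _.
  under eq_bigr do rewrite /Kh rmorphM /= !conjC_nat -mulrA.
  by rewrite sum_pick [Pl l == s]eq_sym.
rewrite sum_pick restr_sub_inj; case: eqP => [->|]; by rewrite ?eqxx ?mul1r ?mul0r.
Qed.


Lemma restr_ext_sub x c : restr A (ext (restr A x) - c) = restr A (x - c).
Proof. by apply/ffunP => i; rewrite /restr !ffunE !subE ext_val /restr ffunE. Qed.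

Lemma Pl_cw s r1 r2 : Pl (restr A (cw s r1 r2)) = s.
Proof. by rewrite /Pl ext_restr_mx HQ. Qed.

Lemma ag_shift (z z' c c' : 'rV[F]_(n + e)) :
  (forall j, j \notin A -> c 0 j = 0) -> (forall j, j \notin A -> c' 0 j = 0) ->
  ag (z + c) (z' + c') = ag z z'.
Proof.
move=> Hc Hc'; apply: eq_forallb => j.
by case Hj: (j \in A) => //=; rewrite !mxE Hc ?Hc' ?Hj // !addr0.
Qed.

Definition Gk s t (x y : 'rV[F]_(n + e)) : C :=
  \sum_h Kh h s (restr A x) * ((ag x y)%:R * Kh h t (restr A y)).

Lemma Gk_val s t s' t' r1 r2 r1' r2' :
  Gk s t (cw s' r1 r2) (cw t' r1' r2') =
  (s' == s)%:R * ((t' == t)%:R *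
    ((r1 - s' *m L1 == r1' - t' *m L1) && (r2 - s' *m L2 == r2' - t' *m L2))%:R) :> C.
Proof.
rewrite /Gk /Kh !Pl_cw.
transitivity (\sum_h ((h == restr A (ext (restr A (cw s' r1 r2)) - kap s))%:R : C) *
   ((s' == s)%:R * ((ag (cw s' r1 r2) (cw t' r1' r2'))%:R *
    ((h == restr A (ext (restr A (cw t' r1' r2')) - kap t))%:R * (t' == t)%:R)))).
  by apply: eq_bigr => h _; ring.
rewrite sum_pick !restr_ext_sub.
have [-> | ne] := eqVneq s' s; last by rewrite !mul0r.
have [-> | ne] := eqVneq t' t; last by rewrite !mul0r !mulr0.
rewrite !mul1r mulr1.
set z := cw 0 (r1 - s *m L1) (r2 - s *m L2).
set z' := cw 0 (r1' - t *m L1) (r2' - t *m L2).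
have Ez : cw s r1 r2 - kap s = z by rewrite /kap -cwB subrr.
have Ez' : cw t r1' r2' - kap t = z' by rewrite /kap -cwB subrr.
have Ex : cw s r1 r2 = z + kap s by rewrite -Ez subrK.
have Ey : cw t r1' r2' = z' + kap t by rewrite -Ez' subrK.
rewrite Ez Ez' Ex Ey ag_shift; try by move=> j; apply: Hk.
rewrite -natrM mulnb andbC restr_ag.
congr ((nat_of_bool _)%:R).
rewrite /z /z'; apply/eqP/andP => [/Hinj [-> ->] | [/eqP -> /eqP ->]]; by [rewrite !eqxx | ].
Qed.


Lemma Kh_conj h s' l : (Kh h s' l)^* = Kh h s' l.
Proof. by rewrite /Kh rmorphM /= !conjC_nat. Qed.

Lemma stepB rho h s t :
  \sum_l \sum_l' Kh h s l * @ptrace C F _ A (ecss_enc GS G1 GE rho) l l' * (Kh h t l')^* =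
  \sum_x \sum_y ecss_enc GS G1 GE rho x y *
     (Kh h s (restr A x) * ((ag x y)%:R * Kh h t (restr A y))).
Proof.
transitivity (\sum_l \sum_l' \sum_x \sum_y ecss_enc GS G1 GE rho x y *
   ((l == restr A x)%:R * ((l' == restr A y)%:R *
     (Kh h s l * ((ag x y)%:R * Kh h t l'))))).
  apply: eq_bigr => l _; apply: eq_bigr => l' _.
  rewrite Kh_conj ptrace_sum mulr_sumr mulr_suml; apply: eq_bigr => x _.
  rewrite mulr_sumr mulr_suml; apply: eq_bigr => y _.
  rewrite [restr A x == l]eq_sym [restr A y == l']eq_sym; ring.
rewrite sum_swap4; apply: eq_bigr => x _; apply: eq_bigr => y _.
under eq_bigr do under eq_bigr do rewrite mulrCA.
transitivity (\sum_l (l == restr A x)%:R * (ecss_enc GS G1 GE rho x y *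
   (Kh h s l * ((ag x y)%:R * Kh h t (restr A y))))).
  apply: eq_bigr => l _.
  rewrite -mulr_sumr; congr (_ * _); rewrite -mulr_sumr; congr (_ * _).
  by rewrite sum_pick.
by rewrite sum_pick.
Qed.


Definition Kr (i : 'I_#|{: labels F A}|) := Kh (enum_val i).

Lemma Kr_tp : kraus_tp Kr.
Proof.
move=> l l'; rewrite /Kr.
rewrite (sum_enum (fun h => \sum_s (Kh h s l)^* * Kh h s l')).
exact: Kh_tp.
Qed.

Lemma Gk_sum s t s' t' :
  \sum_r1 \sum_r2 \sum_r1' \sum_r2' Gk s t (cw s' r1 r2) (cw t' r1' r2') =
  (s' == s)%:R * ((t' == t)%:R * (#|F| ^ (f1 + e))%:R) :> C.
Proof.
rewrite -(count_r (s' *m L1) (t' *m L1) (s' *m L2) (t' *m L2)).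
rewrite !mulr_sumr; apply: eq_bigr => r1 _.
rewrite !mulr_sumr; apply: eq_bigr => r2 _.
rewrite !mulr_sumr; apply: eq_bigr => r1' _.
rewrite !mulr_sumr; apply: eq_bigr => r2' _.
by rewrite Gk_val.
Qed.

Lemma card_F_neq0 : (#|F|%:R : C) != 0.
Proof.
by rewrite pnatr_eq0 -lt0n; apply/card_gt0P; exists 0.
Qed.

Lemma recover rho s t :
  kraus_apply Kr (@ptrace C F _ A (ecss_enc GS G1 GE rho)) s t = rho s t.
Proof.
rewrite /kraus_apply /Kr.
rewrite (sum_enum (fun h => \sum_l \sum_l' Kh h s l *
   @ptrace C F _ A (ecss_enc GS G1 GE rho) l l' * (Kh h t l')^*)).
under eq_bigr do rewrite stepB.
rewrite sum_swap; under eq_bigr do rewrite sum_swap.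
under eq_bigr do under eq_bigr do rewrite -mulr_sumr.
rewrite (enc_expand rho (Gk s t)).
under eq_bigr do under eq_bigr do rewrite Gk_sum.
transitivity (Nq * \sum_s' (s' == s)%:R * \sum_t' (t' == t)%:R *
   (rho s' t' * (#|F| ^ (f1 + e))%:R)).
  congr (_ * _); apply: eq_bigr => s' _; rewrite mulr_sumr; apply: eq_bigr => t' _.
  ring.
rewrite (sum_pick s (fun s' => \sum_t' (t' == t)%:R * (rho s' t' * (#|F| ^ (f1 + e))%:R))).
rewrite (sum_pick t (fun t' => (rho s t' * (#|F| ^ (f1 + e))%:R))).
rewrite /Nq natrX mulrCA mulVf ?mulr1 //.
by rewrite expf_neq0 // card_F_neq0.
Qed.

Lemma authorized_of : authorized C GS G1 GE A.
Proof. exists #|{: labels F A}|, Kr; split; [exact: Kr_tp | by move=> rho _; apply: recover]. Qed.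

End Recover.

Definition W s' t' l l' : C :=
  \sum_r1 \sum_r2 \sum_r1' \sum_r2'
    ((restr A (cw s' r1 r2) == l)%:R * ((restr A (cw t' r1' r2') == l')%:R *
      (ag (cw s' r1 r2) (cw t' r1' r2'))%:R)).

Lemma ptrace_enc rho l l' :
  @ptrace C F _ A (ecss_enc GS G1 GE rho) l l' =
  Nq * \sum_s' \sum_t' rho s' t' * W s' t' l l'.
Proof. by rewrite ptrace_sum enc_expand. Qed.

Lemma kraus_ext m (K : 'I_m -> 'rV[F]_k -> labels F A -> C) (sg sg' : labels F A -> labels F A -> C) s t :
  (forall l l', sg l l' = sg' l l') -> kraus_apply K sg s t = kraus_apply K sg' s t.
Proof.
move=> H; rewrite /kraus_apply; apply: eq_bigr => i _; apply: eq_bigr => l _.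
by apply: eq_bigr => l' _; rewrite H.
Qed.

Definition E (a b : 'rV[F]_k) (s t : 'rV[F]_k) : C := ((s == a) && (t == b))%:R.

Lemma sumE (f : 'rV[F]_k -> 'rV[F]_k -> C) a b :
  \sum_s \sum_t E a b s t * f s t = f a b.
Proof.
transitivity (\sum_s (s == a)%:R * \sum_t (t == b)%:R * f s t).
  apply: eq_bigr => s' _; rewrite mulr_sumr; apply: eq_bigr => t' _.
  by rewrite /E -mulnb natrM mulrA.
rewrite (sum_pick a (fun s => \sum_t (t == b)%:R * f s t)).
exact: (sum_pick b (fun t => f a t)).
Qed.

Lemma sum2D (f g h : 'rV[F]_k -> 'rV[F]_k -> C) :
  \sum_s \sum_t (f s t + g s t) * h s t =
  \sum_s \sum_t f s t * h s t + \sum_s \sum_t g s t * h s t.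
Proof.
rewrite -big_split; apply: eq_bigr => s' _; rewrite -big_split; apply: eq_bigr => t' _.
by rewrite mulrDl.
Qed.

Lemma sum2M c (f h : 'rV[F]_k -> 'rV[F]_k -> C) :
  \sum_s \sum_t (c * f s t) * h s t = c * \sum_s \sum_t f s t * h s t.
Proof.
rewrite mulr_sumr; apply: eq_bigr => s' _; rewrite mulr_sumr; apply: eq_bigr => t' _.
by rewrite mulrA.
Qed.

Lemma trE a b : \sum_s E a b s s = (a == b)%:R.
Proof.
transitivity (\sum_s (s == a)%:R * (s == b)%:R :> C).
  by apply: eq_bigr => s' _; rewrite /E -mulnb natrM.
exact: (sum_pick a (fun s => (s == b)%:R)).
Qed.

Lemma psd_form (rho : 'rV[F]_k -> 'rV[F]_k -> C) (w : 'rV[F]_k -> C) :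
  \sum_s \sum_t (w s)^* * rho s t * w t = \sum_s \sum_t rho s t * ((w s)^* * w t).
Proof. by apply: eq_bigr => s' _; apply: eq_bigr => t' _; ring. Qed.

Lemma dens_E a : is_density (E a a).
Proof.
split; last by rewrite trE eqxx.
by move=> w; rewrite psd_form sumE mulrC mul_conjC_ge0.
Qed.

Lemma not_auth_X d d1 d2 :
  d != 0 -> (forall j, j \in A -> cw d d1 d2 0 j = 0) -> ~ authorized C GS G1 GE A.
Proof.
move=> dn0 Hz [m [K [_ HK]]].
set z := cw d d1 d2.
have Hx : forall r1 r2, cw d (r1 + d1) (r2 + d2) = cw 0 r1 r2 + z.
  by move=> r1 r2; rewrite /z -cwD add0r.
have HW : forall l l', W d d l l' = W 0 0 l l'.
  move=> l l'; rewrite /W.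
  rewrite (reindex_inj (addIr d1)); apply: eq_bigr => r1 _.
  rewrite (reindex_inj (addIr d2)); apply: eq_bigr => r2 _.
  rewrite (reindex_inj (addIr d1)); apply: eq_bigr => r1' _.
  rewrite (reindex_inj (addIr d2)); apply: eq_bigr => r2' _.
  rewrite !Hx.
  have Hr : forall x, restr A (x + z) = restr A x.
    move=> x; apply/ffunP => i; rewrite /restr !ffunE mxE Hz ?addr0 //; exact: (valP i).
  have Ha : forall x y, ag (x + z) (y + z) = ag x y.
    by move=> x y; apply: eq_forallb => j; rewrite !mxE (inj_eq (addIr _)).
  by rewrite !Hr Ha.
have := HK _ (dens_E 0) 0 0; have := HK _ (dens_E d) 0 0.
rewrite (@kraus_ext _ K _ (@ptrace C F _ A (ecss_enc GS G1 GE (E 0 0)))).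
  by move=> -> ; rewrite /E !eqxx [0 == d]eq_sym (negbTE dn0) /=; move/eqP; rewrite eq_sym oner_eq0.
by move=> l l'; rewrite !ptrace_enc !sumE HW.
Qed.

Lemma ag_sym x y : ag x y = ag y x.
Proof. by apply: eq_forallb => j; rewrite eq_sym. Qed.

Definition half : C := (2%:R)^-1.

Lemma two_neq0 : (2%:R : C) != 0.
Proof. by rewrite pnatr_eq0. Qed.

Lemma half_ge0 : 0 <= half.
Proof. by rewrite /half invr_ge0 ler0n. Qed.

Lemma not_auth_Z d :
  d != 0 -> (forall r1 r2 r1' r2', ag (cw 0 r1 r2) (cw d r1' r2') = false) ->
  ~ authorized C GS G1 GE A.
Proof.
move=> dn0 Hag [m [K [_ HK]]].
set r1 := fun s t => half * (E 0 0 s t + E d d s t + E 0 d s t + E d 0 s t).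
set r2 := fun s t => half * (E 0 0 s t + E d d s t).
have d0 : (0 == d) = false by rewrite eq_sym (negbTE dn0).
have Dr1 : is_density r1.
  split.
    move=> w; rewrite psd_form /r1 sum2M !sum2D !sumE.
    have -> : (w 0)^* * w 0 + (w d)^* * w d + (w 0)^* * w d + (w d)^* * w 0 =
              (w 0 + w d) * (w 0 + w d)^* by rewrite rmorphD; ring.
    by rewrite mulr_ge0 ?half_ge0 ?mul_conjC_ge0.
  rewrite /r1 -mulr_sumr !big_split !trE /= !eqxx d0 eq_sym d0 /= !addr0.
  by rewrite /half mulVf // two_neq0.
have Dr2 : is_density r2.
  split.
    move=> w; rewrite psd_form /r2 sum2M !sum2D !sumE.
    by rewrite mulr_ge0 ?half_ge0 // addr_ge0 // mulrC mul_conjC_ge0.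
  rewrite /r2 -mulr_sumr !big_split !trE /= !eqxx.
  by rewrite /half mulVf // two_neq0.
have W0 : forall l l', W 0 d l l' = 0.
  move=> l l'; rewrite /W big1 // => a _; rewrite big1 // => b _.
  rewrite big1 // => a' _; rewrite big1 // => b' _.
  by rewrite Hag !mulr0.
have W1 : forall l l', W d 0 l l' = 0.
  move=> l l'; rewrite /W big1 // => a _; rewrite big1 // => b _.
  rewrite big1 // => a' _; rewrite big1 // => b' _.
  by rewrite ag_sym Hag !mulr0.
have := HK _ Dr1 0 d; have := HK _ Dr2 0 d.
rewrite (@kraus_ext _ K _ (@ptrace C F _ A (ecss_enc GS G1 GE r2))).
  move=> ->; rewrite /r1 /r2 /E !eqxx d0 (negbTE dn0) /= !addr0 add0r mulr0 mulr1 => /esym /eqP.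
  by rewrite /half invr_eq0 (negbTE two_neq0).
move=> l l'; rewrite !ptrace_enc /r1 /r2 !sum2M !sum2D !sumE W0 W1.
by rewrite !addr0.
Qed.

End Q.

Section Parties.
Variables (F : finFieldType) (n u v : nat) (J : {set 'I_n}).
Local Notation A := (parties_Ju u v J).

Lemma memL j : (lshift (u + v) j \in A) = (j \in J).
Proof.
rewrite inE mem_imset; last exact: lshift_inj.
case: (j \in J) => //=; apply/imsetP => -[i _ /(congr1 val) /=].
have := ltn_ord j; lia.
Qed.

Lemma memU i : rshift n (lshift v i) \in A.
Proof. by rewrite inE; apply/orP; right; apply: imset_f. Qed.

Lemma memV i : rshift n (rshift u i) \notin A.
Proof.
rewrite inE negb_or; apply/andP; split; apply/imsetP => -[j _ /(congr1 val) /=].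
  have := ltn_ord j; lia.
have := ltn_ord j; lia.
Qed.

Lemma V1 (c : 'rV[F]_n) (a : 'rV[F]_u) (b : 'rV[F]_v) :
  (forall j, j \in A -> row_mx c (row_mx a b) 0 j = 0) <->
  (forall j0, j0 \in J -> c 0 j0 = 0) /\ a = 0.
Proof.
split.
  move=> H; split.
    by move=> j0 Hj; have := H (lshift _ j0); rewrite memL row_mxEl; apply.
  apply/rowP => i; have := H _ (memU i); rewrite row_mxEr row_mxEl mxE; apply.
move=> [Hc ->] j; case: (split_ordP j) => [j0 ->|j1 ->].
  by rewrite memL row_mxEl; apply: Hc.
case: (split_ordP j1) => [i ->|i ->]; first by rewrite !row_mxEr row_mxEl mxE.
by rewrite (negbTE (memV i)).
Qed.

Lemma V2 (c : 'rV[F]_n) (a : 'rV[F]_u) (b : 'rV[F]_v) :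
  (forall j, j \notin A -> row_mx c (row_mx a b) 0 j = 0) <->
  (forall j0, j0 \notin J -> c 0 j0 = 0) /\ b = 0.
Proof.
split.
  move=> H; split.
    by move=> j0 Hj; have := H (lshift _ j0); rewrite memL row_mxEl; apply.
  apply/rowP => i; have := H _ (memV i); rewrite !row_mxEr mxE; apply.
move=> [Hc ->] j; case: (split_ordP j) => [j0 ->|j1 ->].
  by rewrite memL row_mxEl; apply: Hc.
case: (split_ordP j1) => [i ->|i ->]; last by rewrite !row_mxEr mxE.
by rewrite memU.
Qed.

End Parties.

Section Main.
Variables (F : finFieldType) (n f0 f1 u v : nat).
Variables (GS : 'M[F]_(f0 - f1, n)) (G1 : 'M[F]_(f1, n)) (GU : 'M[F]_(u, n)) (GV : 'M[F]_(v, n)).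
Hypothesis Hrf : row_free (col_mx GS G1).
Hypothesis Hcap : (col_mx GS G1 :&: col_mx GU GV == (0 : 'M[F]_n))%MS.
Local Notation GE := (col_mx GU GV).
Local Notation k := (f0 - f1)%N.

Lemma key0 (d : 'rV[F]_k) (d1 : 'rV[F]_f1) (b : 'rV[F]_(u + v)) :
  d *m GS + d1 *m G1 = b *m GE -> d = 0 /\ d1 = 0.
Proof.
move=> H.
have E1 : d *m GS + d1 *m G1 = row_mx d d1 *m col_mx GS G1 by rewrite mul_row_col.
have : (row_mx d d1 *m col_mx GS G1 <= (0 : 'M_n))%MS.
  by rewrite -(eqmxP Hcap) sub_capmx submxMl /= -E1 H submxMl.
rewrite submx0 -(mul0mx _ (col_mx GS G1)) => /eqP /(row_free_inj Hrf).
by rewrite -row_mx0 => /eq_row_mx.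
Qed.

Lemma Hinj a b a' b' : cw GS G1 GE 0 a b = cw GS G1 GE 0 a' b' -> a = a' /\ b = b'.
Proof.
rewrite /cw => /eq_row_mx [H Hb]; subst b'; split => //.
move: H; rewrite !mul0mx !add0r => /addIr H.
have : row_mx 0 a *m col_mx GS G1 = row_mx 0 a' *m col_mx GS G1.
  by rewrite !mul_row_col !mul0mx !add0r.
by move/(row_free_inj Hrf)/eq_row_mx => [_ ->].
Qed.

Definition CondX (J : {set 'I_n}) := forall c : 'rV[F]_n,
  (forall j, j \in J -> c 0 j = 0) -> (c <= col_mx GS G1 + GV)%MS -> (c <= G1 + GV)%MS.

Definition CondZ (J : {set 'I_n}) := forall y : 'rV[F]_n,
  (forall j, j \in J -> y 0 j = 0) -> (y <= dual (G1 + GU)%MS)%MS ->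
  (y <= dual (col_mx GS G1 + GU)%MS)%MS.

Lemma vanishA_s J s r1 r2 : CondX J ->
  (forall j, j \in parties_Ju u v J -> cw GS G1 GE s r1 r2 0 j = 0) -> s = 0.
Proof.
move=> HX; rewrite /cw -[r2]hsubmxK.
set a := lsubmx r2; set b := rsubmx r2.
move/V1 => [Hc Ha]; rewrite Ha in Hc.
move: Hc; rewrite mul_row_col mul0mx add0r => Hc.
  have Hs : ((s *m GS + r1 *m G1 + b *m GV)%R <= col_mx GS G1 + GV)%MS.
  rewrite -(mul_row_col s r1).
  by rewrite addmx_sub_adds ?submxMl.
case/sub_addsmxP: (HX _ Hc Hs) => [[p1 p2] /= Hp].
have : s *m GS + (r1 - p1) *m G1 = row_mx 0 (p2 - b) *m GE.
  rewrite mul_row_col mul0mx add0r.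
  apply/eqP; rewrite -subr_eq0; apply/eqP.
  have -> : s *m GS + (r1 - p1) *m G1 - (p2 - b) *m GV =
            (s *m GS + r1 *m G1 + b *m GV) - (p1 *m G1 + p2 *m GV).
    by rewrite !mulmxBl; apply/rowP => j; rewrite !mxE; ring.
  by rewrite Hp subrr.
by case/key0.
Qed.

Lemma existsQ J : CondX J -> exists Q : 'M[F]_(n + (u + v), k),
  forall s r1 r2, cw GS G1 GE s r1 r2 *m diagA F (parties_Ju u v J) *m Q = s.
Proof.
move=> HX.
pose Gfull : 'M[F]_(k + f1 + (u + v), n + (u + v)) :=
  col_mx (col_mx (row_mx GS 0) (row_mx G1 0)) (row_mx GE 1%:M).
pose T : 'M[F]_(k + f1 + (u + v), k) := col_mx (col_mx 1%:M 0) 0.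
have Hw : forall (s : 'rV[F]_k) (r1 : 'rV[F]_f1) (r2 : 'rV[F]_(u + v)), row_mx (row_mx s r1) r2 *m Gfull = cw GS G1 GE s r1 r2.
  move=> s r1 r2; rewrite /Gfull /cw !mul_row_col !mul_mx_row !mulmx0 mulmx1 !add_row_mx.
  by rewrite !addr0 add0r.
have HT : forall (s : 'rV[F]_k) (r1 : 'rV[F]_f1) (r2 : 'rV[F]_(u + v)), row_mx (row_mx s r1) r2 *m T = s.
  by move=> s r1 r2; rewrite /T !mul_row_col !mulmx0 mulmx1 !addr0.
have [Q HQ] : exists Q, (Gfull *m diagA F (parties_Ju u v J)) *m Q = T.
  apply: solve_mx => w; rewrite -[w]hsubmxK -[lsubmx w]hsubmxK mulmxA Hw HT => H0.
  apply: (vanishA_s (r1 := rsubmx (lsubmx w)) (r2 := rsubmx w) HX) => j Hj.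
  have := congr1 (fun M : 'rV[F]_(n + (u + v)) => M 0 j) H0; rewrite mul_mx_diag !mxE Hj mulr1; apply.
exists Q => s r1 r2.
by rewrite -Hw -!mulmxA (mulmxA Gfull) HQ HT.
Qed.

Lemma existsL J : CondZ J -> exists L1 : 'M[F]_(k, f1), exists L2 : 'M[F]_(k, u + v),
  forall s j, j \notin parties_Ju u v J -> cw GS G1 GE s (s *m L1) (s *m L2) 0 j = 0.
Proof.
move=> HZ.
pose Pc : 'M[F]_n := diag_mx (\row_j ((j \notin J)%:R)).
have HPc : forall (x : 'rV[F]_n) j, (x *m Pc) 0 j = if j \in J then 0 else x 0 j.
  by move=> x j; rewrite mul_mx_diag !mxE; case: (j \in J); rewrite ?mulr0 ?mulr1.
have Hsub : (GS *m Pc <= col_mx G1 GU *m Pc)%MS.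
  apply: orth_sub => w; rewrite !trmx_mul tr_diag_mx !mulmxA => H.
  set y := w *m diag_mx _ in H *.
  have Hy : forall j, j \in J -> y 0 j = 0 by move=> j Hj; rewrite /y HPc Hj.
  have Hd : (y <= dual (G1 + GU)%MS)%MS.
    by apply/sub_kermxP; apply: (orthS _ H); rewrite addsmxE.
  move: (HZ y Hy Hd) => /sub_kermxP; apply: orthS.
  by apply: submx_trans (addsmxSl _ _); rewrite -addsmxE addsmxSl.
case/submxP: Hsub => D HD.
exists (- lsubmx D), (row_mx (- rsubmx D) 0) => s j Hj.
have HM : (GS + (- lsubmx D) *m G1 + (- rsubmx D) *m GU) *m Pc = 0.
  move: HD; rewrite mulmxA -[D]hsubmxK mul_row_col mulmxDl => HD.
  rewrite !mulmxDl !mulNmx -!mulmxA HD !mulmxA hsubmxK.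
  by rewrite [X in X - _ - _]addrC addrK subrr.
rewrite /cw mul_mx_row mulmx0.
move: j Hj; apply/(V2 J); split => // j0 Hj0.
have -> : s *m GS + s *m - lsubmx D *m G1 + row_mx (s *m - rsubmx D) 0 *m GE =
          s *m (GS + (- lsubmx D) *m G1 + (- rsubmx D) *m GU).
  by rewrite mul_row_col mul0mx addr0 !mulmxDr !mulmxA.
have := congr1 (fun M : 'rV[F]_n => M 0 j0) (congr1 (mulmx s) HM).
by rewrite /= mulmxA HPc (negbTE Hj0) mulmx0 => ->; rewrite mxE.
Qed.

Lemma suff_auth (C : numClosedFieldType) (J : {set 'I_n}) : CondX J -> CondZ J ->
  authorized C GS G1 GE (parties_Ju u v J).
Proof.
move=> HX HZ; have [Q HQ] := existsQ HX; have [L1 [L2 Hk]] := existsL HZ.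
exact: (authorized_of C HQ Hk Hinj).
Qed.

Lemma necX (C : numClosedFieldType) (J : {set 'I_n}) (c : 'rV[F]_n) :
  (forall j, j \in J -> c 0 j = 0) -> (c <= col_mx GS G1 + GV)%MS -> ~~ (c <= G1 + GV)%MS ->
  ~ authorized C GS G1 GE (parties_Ju u v J).
Proof.
move=> Hv /sub_addsmxP [[w b] /= Hcw] Hn.
move: Hcw; rewrite -[w]hsubmxK mul_row_col => Hcw.
have dn0 : lsubmx w != 0.
  apply/eqP => d0; move: Hn; rewrite Hcw d0 mul0mx add0r addmx_sub_adds ?submxMl //.
apply: (not_auth_X (d1 := rsubmx w) (d2 := row_mx 0 b) dn0).
rewrite /cw; apply/(V1 J); split => //.
by rewrite mul_row_col mul0mx add0r -Hcw.
Qed.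

Lemma necZ (C : numClosedFieldType) (J : {set 'I_n}) (y : 'rV[F]_n) :
  (forall j, j \in J -> y 0 j = 0) -> (y <= dual (G1 + GU)%MS)%MS ->
  ~~ (y <= dual (col_mx GS G1 + GU)%MS)%MS ->
  ~ authorized C GS G1 GE (parties_Ju u v J).
Proof.
move=> Hv /sub_kermxP Hd Hn.
have HG1 : y *m G1^T = 0 by apply: (orthS _ Hd); apply: addsmxSl.
have HGU : y *m GU^T = 0 by apply: (orthS _ Hd); apply: addsmxSr.
have HGS : y *m GS^T != 0.
  apply/negP => /eqP H0; move/negP: Hn; apply; apply/sub_kermxP.
  apply: (orthS (A := col_mx (col_mx GS G1) GU)); first by rewrite addsmxE.
  by rewrite !tr_col_mx !mul_mx_row H0 HG1 HGU !row_mx0.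
have [i Hi] : exists i, (y *m GS^T) 0 i != 0.
  have : [exists i, (y *m GS^T) 0 i != 0].
    apply: contraR HGS => /existsPn H; apply/eqP/rowP => i; rewrite [RHS]mxE.
    by apply/eqP; move: (H i); rewrite negbK.
  by case/existsP => i Hi; exists i.
set d : 'rV[F]_k := delta_mx 0 i.
have dn0 : d != 0.
  apply/eqP => /(congr1 (fun M : 'rV[F]_k => M 0 i)); rewrite !mxE !eqxx /=.
  by move/eqP; rewrite oner_eq0.
apply: (not_auth_Z dn0) => r1 r2 r1' r2'; apply/negP => /forallP Hag.
have Hz : forall j, j \notin parties_Ju u v J ->
    cw GS G1 GE d (r1' - r1) (r2' - r2) 0 j = 0.
  move=> j Hj; rewrite -[d]subr0 cwB subE.
  by move: (Hag j); rewrite Hj /= => /eqP ->; rewrite subrr.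
move: Hz; rewrite /cw -[r2' - r2]hsubmxK => /(V2 J) [Hc Hb].
rewrite Hb mul_row_col mul0mx addr0 in Hc.
set c' := (d *m GS + (r1' - r1) *m G1 + lsubmx (r2' - r2) *m GU)%R in Hc.
have E0 : (y *m c'^T) 0 0 = 0.
  rewrite mxE big1 // => j _; rewrite mxE.
  by case Hj: (j \in J); [rewrite Hv ?Hj ?mul0r | rewrite Hc ?Hj ?mulr0].
have E1 : y *m c'^T = (y *m GS^T) *m d^T.
  by rewrite /c' !linearD /= !trmx_mul !mulmxA HG1 HGU !mul0mx !addr0.
move: E0; rewrite E1 /d trmx_delta -colE mxE => H0.
by move/eqP: Hi; apply.
Qed.

End Main.

Lemma bigmin_le_seq (T : eqType) (s : seq T) (P : pred T) (G : T -> nat) x0 c :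
  c \in s -> P c -> (\big[minn/x0]_(i <- s | P i) G i <= G c)%N.
Proof.
elim: s => // a s IH; rewrite inE big_cons => /orP [/eqP <- | Hc] Pc.
  by rewrite Pc geq_minl.
case: (P a); last exact: IH.
by rewrite geq_min IH // orbT.
Qed.

Lemma bigmin_leF (T : finType) (P : pred T) (G : T -> nat) x0 c :
  P c -> (\big[minn/x0]_(i | P i) G i <= G c)%N.
Proof. by move=> Pc; apply: bigmin_le_seq; rewrite ?mem_index_enum. Qed.

Lemma bigmin_attain (T : finType) (P : pred T) (G : T -> nat) x0 :
  \big[minn/x0]_(i | P i) G i = x0 \/ exists c, P c /\ G c = \big[minn/x0]_(i | P i) G i.
Proof.
apply: (big_ind (fun z => z = x0 \/ exists c, P c /\ G c = z)); first by left.
  by move=> x y Hx Hy /=; case: (leqP x y).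
by move=> i Pi; right; exists i.
Qed.

Lemma pick_subset (T : finType) (B : {set T}) t :
  (t <= #|B|)%N -> exists J : {set T}, J \subset B /\ #|J| = t.
Proof.
move=> Ht; exists [set x in take t (enum B)]; split.
  by apply/subsetP => x; rewrite inE => /mem_take; rewrite mem_enum.
rewrite cardsE; move/card_uniqP: (take_uniq t (enum_uniq (mem B))) => ->.
by rewrite size_takel // -cardE.
Qed.

Lemma wt_le_n (F : finFieldType) n (c : 'rV[F]_n) : (wt c <= n)%N.
Proof. by rewrite /wt; apply: leq_trans (max_card _) _; rewrite card_ord. Qed.

Lemma wt_supp (F : finFieldType) n (c : 'rV[F]_n) (J : {set 'I_n}) :
  (forall j, j \in J -> c 0 j = 0) -> (wt c <= n - #|J|)%N.
Proof.
move=> H; apply: (@leq_trans #|~: J|); last by rewrite cardsCs setCK card_ord.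
apply: subset_leq_card; apply/subsetP => j; rewrite !inE; apply: contra => Hj.
by apply/eqP; apply: H.
Qed.

Definition supp (F : finFieldType) n (c : 'rV[F]_n) : {set 'I_n} := [set j | c 0 j != 0].

Lemma supp_compl (F : finFieldType) n (c : 'rV[F]_n) :
  (n - wt c <= #|~: supp c|)%N /\
  (forall J : {set 'I_n}, J \subset ~: supp c -> forall j, j \in J -> c 0 j = 0).
Proof.
split; first by rewrite cardsCs setCK card_ord /wt /supp.
move=> J HJ j Hj; have := subsetP HJ j Hj; rewrite !inE negbK => /eqP //.
Qed.

Theorem theorem3 (C : numClosedFieldType) (F : finFieldType) (n f0 f1 u v : nat)
    (GS : 'M[F]_(f0 - f1, n)) (G1 : 'M[F]_(f1, n))
    (GU : 'M[F]_(u, n)) (GV : 'M[F]_(v, n)) :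
  (f1 < f0)%N ->
  row_free (col_mx GS G1) ->
  (col_mx GS G1 :&: col_mx GU GV == (0 : 'M[F]_n))%MS ->
  forall tau : nat, (tau <= n)%N ->
    (forall J : {set 'I_n}, #|J| = tau ->
       authorized C GS G1 (col_mx GU GV) (parties_Ju u v J))
    <-> (tau_u GS G1 GU GV <= tau)%N.
Proof.
move=> Hf Hrf Hcap tau Htau.
set d1 := wt_diff (col_mx GS G1 + GV)%MS (G1 + GV)%MS.
set d2 := wt_diff (dual (G1 + GU)%MS) (dual (col_mx GS G1 + GU)%MS).
have Etu : tau_u GS G1 GU GV = (n - minn d1 d2 + 1)%N by [].
have Hd1n : (d1 <= n)%N.
  have Hk : (0 < f0 - f1)%N by rewrite subn_gt0.
  pose i : 'I_(f0 - f1) := Ordinal Hk.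
  pose dd : 'rV[F]_(f0 - f1) := delta_mx 0 i.
  have ddn0 : dd != 0.
    apply/eqP => /(congr1 (fun M : 'rV[F]_(f0 - f1) => M 0 i)); rewrite !mxE !eqxx /=.
    by move/eqP; rewrite oner_eq0.
  apply: leq_trans (wt_le_n (dd *m GS)).
  rewrite /d1 /wt_diff; apply: bigmin_leF; apply/andP; split.
    have -> : dd *m GS = row_mx dd 0 *m col_mx GS G1 by rewrite mul_row_col mul0mx addr0.
    exact: submx_trans (submxMl _ _) (addsmxSl _ _).
  apply/negP => /sub_addsmxP [[a b] /= H].
  have : dd *m GS + (- a) *m G1 = row_mx 0 b *m col_mx GU GV.
    by rewrite mul_row_col mul0mx add0r mulNmx H [a *m G1 + _]addrC addrK.
  by case/(key0 Hrf Hcap) => /eqP; rewrite (negbTE ddn0).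
have Hm : (minn d1 d2 <= n)%N by rewrite geq_min Hd1n.
split.
  move=> Hall; rewrite Etu; case: (leqP (n - minn d1 d2 + 1) tau) => // Hlt; exfalso.
  case: (leqP d1 d2) => Hd.
    rewrite (minn_idPl Hd) in Hlt.
    case: (bigmin_attain (fun c : 'rV[F]_n => (c <= col_mx GS G1 + GV)%MS && ~~ (c <= G1 + GV)%MS)
             (@wt F n) n.+1) => [Heq | [c [/andP [Hc1 Hc2] Hwc]]].
      by move: Hd1n; rewrite /d1 /wt_diff Heq ltnn.
    have [Hcard Hsupp] := supp_compl c.
    have [J [HJ HJc]] := @pick_subset _ (~: supp c) tau ltac:(rewrite -/(wt_diff _ _) -/d1 in Hwc; lia).
    exact: (necX (Hsupp J HJ) Hc1 Hc2 (Hall J HJc)).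
  rewrite (minn_idPr (ltnW Hd)) in Hlt.
  case: (bigmin_attain (fun y : 'rV[F]_n => (y <= dual (G1 + GU)%MS)%MS &&
             ~~ (y <= dual (col_mx GS G1 + GU)%MS)%MS) (@wt F n) n.+1)
    => [Heq | [c [/andP [Hc1 Hc2] Hwc]]].
    by move: (leq_trans Hd Hd1n); rewrite /d2 /wt_diff Heq; lia.
  have [Hcard Hsupp] := supp_compl c.
  have [J [HJ HJc]] := @pick_subset _ (~: supp c) tau ltac:(rewrite -/(wt_diff _ _) -/d2 in Hwc; lia).
  exact: (necZ (Hsupp J HJ) Hc1 Hc2 (Hall J HJc)).
move=> Hle J HJ; apply: (suff_auth Hrf Hcap C).
  move=> c Hv Hc; apply/negPn/negP => Hn.
  have H1 : (d1 <= wt c)%N by rewrite /d1 /wt_diff; apply: bigmin_leF; rewrite Hc Hn.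
  have := wt_supp Hv; rewrite HJ; rewrite Etu in Hle; lia.
move=> c Hv Hc; apply/negPn/negP => Hn.
have H1 : (d2 <= wt c)%N by rewrite /d2 /wt_diff; apply: bigmin_leF; rewrite Hc Hn.
have := wt_supp Hv; rewrite HJ; rewrite Etu in Hle; lia.
Qed.
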